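(* Let $K\ge2$ and $d\ge1$ be integers with $d=2$ or $K\le d+1$. Then no Softmax Code $\mathbf W\in\mathrm{OB}(d,K)$ has a rattler; i.e., for every Softmax Code $\mathbf W$ and every $k\in[K]$, $\operatorname{dist}(\mathbf w_k,\{\mathbf w_j\}_{j\ne k})=\min_{k'}\operatorname{dist}(\mathbf w_{k'},\{\mathbf w_j\}_{j\ne k'})$.
   Context: $\mathrm{OB}(d,K)$ is the set of real $d\times K$ matrices with unit-norm columns $\mathbf w_1,\dots,\mathbf w_K$. $\operatorname{dist}(\mathbf v,\mathcal W)=\inf\{\|\mathbf v-\mathbf w\|_2:\mathbf w\in\operatorname{conv}(\mathcal W)\}$; $\rho_{\text{one-vs-rest}}(\mathbf W)=\min_k\operatorname{dist}(\mathbf w_k,\{\mathbf w_j\}_{j\ne k})$. A Softmax Code is a maximizer of $\rho_{\text{one-vs-rest}}$ over $\mathrm{OB}(d,K)$. A rattler of $\mathbf W$ is an index $k$ with $\operatorname{dist}(\mathbf w_k,\{\mathbf w_j\}_{j\ne k})\ne\rho_{\text{one-vs-rest}}(\mathbf W)$. *)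

(* Defs.v *)
From HB Require Import structures.
From mathcomp Require Import all_boot all_order all_algebra.
From mathcomp Require Import classical_sets reals.
Set Implicit Arguments. Unset Strict Implicit. Unset Printing Implicit Defensive.
Import Order.TTheory GRing.Theory Num.Theory.
Local Open Scope ring_scope.
Local Open Scope classical_set_scope.

Definition enorm (R : realType) (d : nat) (v : 'cV[R]_d) : R :=
  Num.sqrt (\sum_(i < d) v i ord0 ^+ 2).

Definition wcol (R : realType) (d K : nat) (W : 'M[R]_(d, K)) (k : 'I_K) : 'cV[R]_d :=
  col k W.

Definition OB (R : realType) (d K : nat) (W : 'M[R]_(d, K)) : Prop :=
  forall k : 'I_K, enorm (wcol W k) = 1.

(* dist(w_k, {w_j}_{j<>k}) = inf over points of conv{w_j : j <> k} of ||w_k - w||. *)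
Definition dist_rest (R : realType) (d K : nat) (W : 'M[R]_(d, K)) (k : 'I_K) : R :=
  inf [set r : R | exists lam : 'I_K -> R,
         [/\ (forall j, 0 <= lam j), \sum_(j < K) lam j = 1, lam k = 0 &
             r = enorm (wcol W k - \sum_(j < K) lam j *: wcol W j)]].

Definition rho_ovr (R : realType) (d K : nat) (W : 'M[R]_(d, K)) : R :=
  inf [set dist_rest W k | k in [set: 'I_K]].

Definition softmax_code (R : realType) (d K : nat) (W : 'M[R]_(d, K)) : Prop :=
  OB W /\ forall W' : 'M[R]_(d, K), OB W' -> rho_ovr W' <= rho_ovr W.

Definition rattler (R : realType) (d K : nat) (W : 'M[R]_(d, K)) (k : 'I_K) : Prop :=
  dist_rest W k <> rho_ovr W.

(* Main.v *)
Require Import Defs.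
From HB Require Import structures.
From mathcomp Require Import all_boot all_order all_algebra.
From mathcomp Require Import classical_sets reals.
From mathcomp Require Import boolp trigo ring lra.
Import Order.TTheory GRing.Theory Num.Theory.
Set Implicit Arguments. Unset Strict Implicit. Unset Printing Implicit Defensive.
Local Open Scope ring_scope.
Local Open Scope classical_set_scope.

Section P0.
Variable R : realType.

Definition dotv (d : nat) (u v : 'cV[R]_d) : R := \sum_i u i ord0 * v i ord0.

Lemma enormE d (v : 'cV[R]_d) : enorm v = Num.sqrt (dotv v v).
Proof. by rewrite /enorm /dotv; under eq_bigr do rewrite expr2. Qed.

Lemma dotvC d (u v : 'cV[R]_d) : dotv u v = dotv v u.
Proof. by apply: eq_bigr => i _; rewrite mulrC. Qed.

Lemma dotvDr d (u v w : 'cV[R]_d) : dotv u (v + w) = dotv u v + dotv u w.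
Proof. by rewrite /dotv -big_split; apply: eq_bigr => i _; rewrite mxE mulrDr. Qed.

Lemma dotvNr d (u v : 'cV[R]_d) : dotv u (- v) = - dotv u v.
Proof. by rewrite /dotv -sumrN; apply: eq_bigr => i _; rewrite mxE mulrN. Qed.

Lemma dotvBr d (u v w : 'cV[R]_d) : dotv u (v - w) = dotv u v - dotv u w.
Proof. by rewrite dotvDr dotvNr. Qed.

Lemma dotvZr d (u v : 'cV[R]_d) a : dotv u (a *: v) = a * dotv u v.
Proof. by rewrite /dotv mulr_sumr; apply: eq_bigr => i _; rewrite mxE mulrCA. Qed.

Lemma dotv_sumr d I (r : seq I) (P : pred I) (u : 'cV[R]_d) (F : I -> 'cV[R]_d) :
  dotv u (\sum_(i <- r | P i) F i) = \sum_(i <- r | P i) dotv u (F i).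
Proof.
elim/big_rec2: _ => [|i y1 y2 _ <-]; last by rewrite dotvDr.
by rewrite /dotv big1 // => i _; rewrite mxE mulr0.
Qed.

Lemma dotvDl d (u v w : 'cV[R]_d) : dotv (v + w) u = dotv v u + dotv w u.
Proof. by rewrite dotvC dotvDr !(dotvC u). Qed.
Lemma dotvBl d (u v w : 'cV[R]_d) : dotv (v - w) u = dotv v u - dotv w u.
Proof. by rewrite dotvC dotvBr !(dotvC u). Qed.
Lemma dotvZl d (u v : 'cV[R]_d) a : dotv (a *: v) u = a * dotv v u.
Proof. by rewrite dotvC dotvZr dotvC. Qed.

Lemma dotv_ge0 d (u : 'cV[R]_d) : 0 <= dotv u u.
Proof. by apply: sumr_ge0 => i _; rewrite -expr2 sqr_ge0. Qed.

Lemma enorm_ge0 d (u : 'cV[R]_d) : 0 <= enorm u.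
Proof. by rewrite enormE sqrtr_ge0. Qed.

Lemma enorm_sqr d (u : 'cV[R]_d) : enorm u ^+ 2 = dotv u u.
Proof. by rewrite enormE sqr_sqrtr // dotv_ge0. Qed.

Lemma dotv_unit d (w : 'cV[R]_d) : enorm w = 1 -> dotv w w = 1.
Proof. by move=> h; rewrite -enorm_sqr h expr1n. Qed.

Lemma cs_unit d (w v : 'cV[R]_d) : enorm w = 1 -> dotv w v <= enorm v.
Proof.
move=> hw; have ww := dotv_unit hw.
set a := dotv w v.
have h : 0 <= dotv (v - a *: w) (v - a *: w) by apply: dotv_ge0.
rewrite dotvBl !dotvBr !dotvZl !dotvZr ww (dotvC v w) -/a in h.
have h2 : a ^+ 2 <= enorm v ^+ 2 by rewrite enorm_sqr; lra.
have := enorm_ge0 v => h3.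
case: (lerP a 0) => ha; first lra.
by rewrite -(ler_pXn2r (n:=2)) // ?nnegrE ?ltW.
Qed.

Variables (d K : nat).
Implicit Types (W : 'M[R]_(d, K)) (k : 'I_K).

Definition dset W k := [set r : R | exists lam : 'I_K -> R,
         [/\ (forall j, 0 <= lam j), \sum_(j < K) lam j = 1, lam k = 0 &
             r = enorm (wcol W k - \sum_(j < K) lam j *: wcol W j)]].

Lemma dset_lb W k : has_lbound (dset W k).
Proof. by exists 0 => r [lam [_ _ _ ->]]; apply: enorm_ge0. Qed.

Lemma dist_le W k (lam : 'I_K -> R) : (forall j, 0 <= lam j) ->
  \sum_(j < K) lam j = 1 -> lam k = 0 ->
  dist_rest W k <= enorm (wcol W k - \sum_(j < K) lam j *: wcol W j).
Proof. move=> h1 h2 h3; apply: (ge_inf (dset_lb W k)); by exists lam. Qed.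

Lemma dist_ge W k c : (exists j : 'I_K, j != k) ->
  (forall lam : 'I_K -> R, (forall j, 0 <= lam j) ->
  \sum_(j < K) lam j = 1 -> lam k = 0 ->
  c <= enorm (wcol W k - \sum_(j < K) lam j *: wcol W j)) -> c <= dist_rest W k.
Proof.
move=> [j jk] h; apply: lb_le_inf; last by move=> r [lam [h1 h2 h3 ->]]; apply: h.
exists (enorm (wcol W k - \sum_(i < K) (if i == j then 1 else 0) *: wcol W i)).
exists (fun i => if i == j then 1 else 0); split => //.
- by move=> i; case: ifP.
- by rewrite -big_mkcond /= big_pred1_eq.
- by rewrite eq_sym (negbTE jk).
Qed.

Hypothesis hK : (1 < K)%N.

Lemma other k : exists j : 'I_K, j != k.
Proof.
case: (eqVneq k (Ordinal hK)) => [->|h]; last by exists (Ordinal hK); rewrite eq_sym.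
have h0 : (0 < K)%N by apply: ltn_trans hK.
by exists (Ordinal h0).
Qed.

Lemma dist_ge0 W k : 0 <= dist_rest W k.
Proof. by apply: dist_ge (other k) _ => lam *; apply: enorm_ge0. Qed.

Lemma rho_le W k : rho_ovr W <= dist_rest W k.
Proof.
apply: ge_inf; last by exists k.
by exists 0 => r [i _ <-]; apply: dist_ge0.
Qed.

Lemma rho_ge W c : (forall k, c <= dist_rest W k) -> c <= rho_ovr W.
Proof.
move=> h; apply: lb_le_inf; last by move=> r [i _ <-].
have h0 : (0 < K)%N by apply: ltn_trans hK.
by exists (dist_rest W (Ordinal h0)); exists (Ordinal h0).
Qed.

Lemma reduction W c : softmax_code W ->
  (exists W', OB W' /\ forall k, c <= dist_rest W' k) ->
  (forall W, OB W -> (forall k, c <= dist_rest W k) -> forall k, dist_rest W k <= c) ->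
  forall k, ~ rattler W k.
Proof.
move=> [hOB hmax] [W' [hW' hc]] hU k; rewrite /rattler.
have h1 : c <= rho_ovr W by apply: le_trans (hmax W' hW'); apply: rho_ge.
have h2 : forall k, c <= dist_rest W k by move=> i; apply: le_trans h1 (rho_le W i).
have h3 := hU W hOB h2 k.
have h4 := rho_le W k.
by apply; apply/eqP; rewrite eq_le h4 (le_trans h3 h1).
Qed.

Lemma dist_lower W k g : OB W ->
  (forall j, j != k -> dotv (wcol W k) (wcol W j) <= g) -> 1 - g <= dist_rest W k.
Proof.
move=> hOB hg; apply: dist_ge (other k) _ => lam h0 h1 hk.
apply: le_trans (cs_unit _ (hOB k)).
rewrite dotvBr dotv_unit // dotv_sumr lerD2l lerN2.
have -> : g = \sum_(j < K) lam j * g by rewrite -mulr_suml h1 mul1r.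
apply: ler_sum => j _; rewrite dotvZr.
case: (eqVneq j k) => [->|jk]; first by rewrite hk !mul0r.
by apply: ler_wpM2l => //; apply: hg.
Qed.

End P0.


Section P1.
Variable R : realType.
Variables (d K : nat).
Hypothesis hK : (1 < K)%N.
Implicit Types (W : 'M[R]_(d, K)) (k : 'I_K).

Lemma simplex_upper W : OB W ->
  (forall k, K%:R / K.-1%:R <= dist_rest W k) -> forall k, dist_rest W k <= K%:R / K.-1%:R.
Proof.
move=> hOB hc.
set n : R := K.-1%:R.
have hn : 0 < n by rewrite /n ltr0n -ltnS prednK // ltnW.
have hKn : K%:R = n + 1 by rewrite /n -{1}(prednK (ltnW hK)) natr1.
set S := \sum_(j < K) wcol W j.
pose lam k := fun j : 'I_K => if j == k then 0 else n^-1.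
pose v k := wcol W k - \sum_(j < K) lam k j *: wcol W j.
have hv : forall k, v k = (1 + n^-1) *: wcol W k - n^-1 *: S.
  move=> k; rewrite /v /S (bigD1 k) //= (bigD1 k (P := predT)) //= /lam eqxx scale0r add0r.
  rewrite scalerDr scalerDl scale1r -addrA; congr (_ + _).
  rewrite scaler_sumr opprD addrA addrN add0r; congr (- _).
  by apply: eq_bigr => j /negbTE ->.
have hd : forall k, dist_rest W k <= enorm (v k).
  move=> k; apply: dist_le.
  - by move=> j; rewrite /lam; case: ifP => // _; rewrite invr_ge0 ltW.
  - rewrite (bigD1 k) //= /lam eqxx add0r.
    rewrite (eq_bigr (fun _ => n^-1)); last by move=> j /negbTE ->.
    rewrite sumr_const cardC1 card_ord -mulr_natr mulrC.
    by rewrite /n mulfV // gt_eqF.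
  - by rewrite /lam eqxx.
have hdot : forall k, dotv (v k) (v k) =
   (1 + n^-1)^+2 - 2 * (1 + n^-1) * n^-1 * dotv (wcol W k) S + n^-2 * dotv S S.
  move=> k; rewrite hv !dotvBl !dotvBr !dotvZl !dotvZr dotv_unit // (dotvC S).
  by field; rewrite gt_eqF.
have hM : forall x : R, x *+ K = x * (n + 1) by move=> x; rewrite -mulr_natr hKn.
have hsum : \sum_k dotv (v k) (v k) <= \sum_(k < K) (K%:R / n) ^+ 2.
  rewrite (eq_bigr _ (fun k _ => hdot k)) big_split /= big_split /= sumr_const card_ord.
  rewrite sumrN -mulr_sumr.
  have -> : \sum_(i < K) dotv (wcol W i) S = dotv S S.
    by rewrite /S dotv_sumr; apply: eq_bigr => i _; rewrite dotvC.
  rewrite sumr_const card_ord !hM.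
  have := dotv_ge0 S => hS.
  set x := dotv S S.
  rewrite sumr_const card_ord hM -subr_ge0.
  set L := (X in _ - X).
  have -> : ((1 * (n + 1) / n) ^+ 2 * (n + 1)) - L = (n + 1) / n ^+ 2 * x.
    by rewrite /L; field; rewrite gt_eqF.
  apply: mulr_ge0 => //; apply: divr_ge0; first lra.
  by rewrite exprn_ge0 // ltW.
have hge : forall k, (K%:R / n) ^+ 2 <= dotv (v k) (v k).
  move=> k; rewrite -enorm_sqr ler_pXn2r // ?nnegrE ?enorm_ge0 //.
    exact: le_trans (hc k) (hd k).
  by apply: divr_ge0; rewrite ?ler0n // ltW.
have hs0 : \sum_(i < K) (dotv (v i) (v i) - (K%:R / n) ^+ 2) = 0.
  apply/eqP; rewrite eq_le sumr_ge0 ?andbT; last by move=> i _; rewrite subr_ge0.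
  by rewrite sumrB subr_le0.
have heq : forall k, dotv (v k) (v k) - (K%:R / n) ^+ 2 = 0.
  move=> k; apply: (psumr_eq0P _ hs0) => //.
  by move=> i _; rewrite subr_ge0.
move=> k; apply: le_trans (hd k) _.
have /eqP := heq k; rewrite subr_eq0 -enorm_sqr.
rewrite eqrXn2 ?enorm_ge0 //; last by apply: divr_ge0; rewrite ?ler0n // ltW.
by move/eqP ->.
Qed.
End P1.


Section P2.
Variable R : realType.

Lemma bmul (b1 b2 : bool) : (b1%:R * b2%:R : R) = (b1 && b2)%:R.
Proof. by case: b1; case: b2; rewrite ?mul1r ?mul0r. Qed.

Lemma ind_sum (d m : nat) : (m < d)%N -> \sum_(i < d) ((i : nat) == m)%:R = 1 :> R.
Proof.
move=> hm; rewrite (bigD1 (Ordinal hm)) //= eqxx big1 ?addr0 // => i hi.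
case: eqP => // h; case/negP: hi; apply/eqP/val_inj => //.
Qed.

Lemma lt_sum (d n : nat) : (n <= d)%N -> \sum_(i < d) ((i : nat) < n)%:R = n%:R :> R.
Proof.
move=> hnd; rewrite (eq_bigr (fun i : 'I_d => if (i < n)%N then 1 else 0)); last by move=> i _; case: ifP.
rewrite -big_mkcond /= (big_ord_narrow hnd) /=.
by rewrite sumr_const card_ord.
Qed.

Variables (d K : nat).
Hypothesis hK : (1 < K)%N.
Hypothesis hKd : (K <= d.+1)%N.

Lemma simplex_exists : exists W : 'M[R]_(d, K),
  OB W /\ forall k, K%:R / K.-1%:R <= dist_rest W k.
Proof.
set n := K.-1.
have hn1 : (0 < n)%N by rewrite /n -ltnS prednK // ltnW.
have hKn : K = n.+1 by rewrite /n prednK // ltnW.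
have hnd : (n <= d)%N by rewrite -ltnS -hKn.
set nR : R := n%:R.
have hnR : 0 < nR by rewrite /nR ltr0n.
set g : R := (Num.sqrt nR)^-1.
set a : R := Num.sqrt (nR + 1) * g.
set b : R := (g - a) / nR.
have hg2 : g ^+ 2 = nR^-1 by rewrite /g exprVn sqr_sqrtr // ltW.
have ha2 : a ^+ 2 = (nR + 1) / nR by rewrite /a exprMn hg2 sqr_sqrtr //; lra.
pose e (j : nat) : 'cV[R]_d := \col_i ((i : nat) == j)%:R.
pose one : 'cV[R]_d := \col_i ((i : nat) < n)%:R.
have dee : forall j j', (j < n)%N -> (j' < n)%N -> dotv (e j) (e j') = (j == j')%:R.
  move=> j j' hj hj'; rewrite /dotv.
  under eq_bigr do rewrite !mxE bmul.
  case: (eqVneq j j') => [<-|hjj].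
    under eq_bigr do rewrite andbb.
    by apply: ind_sum; apply: leq_trans hj hnd.
  rewrite big1 // => i _; case: (eqVneq (i : nat) j) => [hij|] //=.
  by rewrite hij (negbTE hjj).
have deo : forall j, (j < n)%N -> dotv (e j) one = 1.
  move=> j hj; rewrite /dotv.
  under eq_bigr do rewrite !mxE bmul.
  rewrite -[RHS](@ind_sum d j); last by apply: leq_trans hj hnd.
  apply: eq_bigr => i _; case: eqP => [->|_] /=; by rewrite ?eqxx ?hj.
have doo : dotv one one = nR.
  rewrite /dotv; under eq_bigr do rewrite !mxE bmul andbb.
  exact: lt_sum.
pose W : 'M[R]_(d, K) := \matrix_(i, j) (if ((j : nat) < n)%N
    then a * ((i : nat) == j)%:R + b * ((i : nat) < n)%:R else - g * ((i : nat) < n)%:R).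
have c1 : forall j : 'I_K, (j < n)%N -> wcol W j = a *: e j + b *: one.
  by move=> j hj; apply/matrixP => i l; rewrite !mxE hj.
have c2 : forall j : 'I_K, ~~ (j < n)%N -> wcol W j = - g *: one.
  by move=> j hj; apply/matrixP => i l; rewrite !mxE (negbTE hj).
have hdot : forall j j' : 'I_K, dotv (wcol W j) (wcol W j') =
    if j == j' then 1 else - nR^-1.
  move=> j j'.
  case: (boolP (j < n)%N) => hj; case: (boolP (j' < n)%N) => hj'.
  - rewrite c1 // c1 // !dotvDl !dotvDr !dotvZl !dotvZr !dee // !deo //.
    rewrite (dotvC one) deo // doo.
    have -> : (j == j') = ((j : nat) == j') by [].
    case: eqP => _.
      have -> : a * (a * true%:R) + a * (b * 1) + (b * (a * 1) + b * (b * nR)) =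
         a ^+ 2 + (2 * a * b + nR * b ^+ 2) by rewrite /=; ring.
      have -> : 2 * a * b + nR * b ^+ 2 = (g ^+ 2 - a ^+ 2) / nR.
        by rewrite /b; field; rewrite gt_eqF.
      by rewrite hg2 ha2; field; rewrite gt_eqF.
    have -> : a * (a * false%:R) + a * (b * 1) + (b * (a * 1) + b * (b * nR)) =
         (2 * a * b + nR * b ^+ 2) by rewrite /=; ring.
    have -> : 2 * a * b + nR * b ^+ 2 = (g ^+ 2 - a ^+ 2) / nR.
      by rewrite /b; field; rewrite gt_eqF.
    by rewrite hg2 ha2; field; rewrite gt_eqF.
  - have -> : (j == j') = false.
      apply/negbTE; apply: contraNneq hj' => <-; exact: hj.
    rewrite c1 // c2 // !dotvDl !dotvZl !dotvZr deo // doo.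
    have -> : a * (- g * 1) + b * (- g * nR) = - g * (a + b * nR) by ring.
    have -> : a + b * nR = g by rewrite /b; field; rewrite gt_eqF.
    by rewrite mulNr -expr2 hg2.
  - have -> : (j == j') = false.
      apply/negbTE; apply: contraNneq hj => ->; exact: hj'.
    rewrite c2 // c1 // !dotvDr !dotvZl !dotvZr (dotvC one) deo // doo.
    have -> : - g * (a * 1) + - g * (b * nR) = - g * (a + b * nR) by ring.
    have -> : a + b * nR = g by rewrite /b; field; rewrite gt_eqF.
    by rewrite mulNr -expr2 hg2.
  - have -> : j = j'.
      apply: val_inj; apply/eqP; rewrite eqn_leq.
      have h1 : (j < n.+1)%N by rewrite -hKn.
      have h2 : (j' < n.+1)%N by rewrite -hKn.
      move: hj hj'; rewrite -!leqNgt => h3 h4.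
      by apply/andP; split; apply: leq_trans (_ : n <= _)%N; rewrite // -ltnS.
    rewrite eqxx c2 // !dotvZl !dotvZr doo.
    have -> : - g * (- g * nR) = g ^+ 2 * nR by ring.
    by rewrite hg2 mulVf // gt_eqF.
exists W; split.
  by move=> k; rewrite enormE hdot eqxx sqrtr1.
move=> k.
have -> : K%:R / nR = 1 - (- nR^-1).
  by rewrite hKn -/n -natr1 -/nR opprK; field; rewrite gt_eqF.
apply: dist_lower => //.
  by move=> j; rewrite enormE hdot eqxx sqrtr1.
by move=> j hj; rewrite hdot eq_sym (negbTE hj).
Qed.
End P2.


Section P3.
Variable R : realType.
Implicit Types t a b : R.

Lemma ler_cos (x y : R) : 0 <= x -> x <= y -> y <= pi -> cos y <= cos x.
Proof.
move=> h0 hxy hy; rewrite le_eqVlt in hxy; case/orP: hxy => [/eqP ->//|hxy].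
apply: ltW; rewrite ltr_cos // in_itv /=; apply/andP; split => //; lra.
Qed.

Lemma chord_bound t a b : 0 < a -> 0 < b -> a + b <= pi ->
  let x := sin (a + b) / (sin a + sin b) in
  [/\ 0 < sin a + sin b,
      cos t - (sin b / (sin a + sin b) * cos (t - a) + sin a / (sin a + sin b) * cos (t + b))
        = (1 - x) * cos t,
      sin t - (sin b / (sin a + sin b) * sin (t - a) + sin a / (sin a + sin b) * sin (t + b))
        = (1 - x) * sin t,
      0 <= 1 - x & 1 - x <= 1 - cos ((a + b) / 2)].
Proof.
move=> ha hb hab x.
have sa : 0 < sin a by apply: sin_gt0_pi; lra.
have sb : 0 < sin b by apply: sin_gt0_pi; lra.
have hs : 0 < sin a + sin b by lra.
have hs0 : sin a + sin b != 0 by rewrite gt_eqF.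
set h := (a + b) / 2; set e := (a - b) / 2.
have pi0 := @pi_gt0 R.
have ne0 := normr_ge0 e.
have hae : a = h + e by rewrite /h /e; field.
have hbe : b = h - e by rewrite /h /e; field.
have he : `|e| < h by rewrite /h /e ltr_norml; apply/andP; split; lra.
have hh : h <= pi / 2 by rewrite /h; lra.
have h0 : 0 < h by rewrite /h; lra.
have sh : 0 < sin h by apply: sin_gt0_pi; lra.
have ch : 0 <= cos h by apply: cos_ge0_pihalf; apply/andP; split; lra.
have ce : cos h <= cos e.
  rewrite -(cos_norm e); apply: ler_cos => //; lra.
have ce0 : 0 < cos e.
  rewrite -(cos_norm e); apply: cos_gt0_pihalf; apply/andP; split; lra.
have hx : x = cos h / cos e.
  rewrite /x hae hbe.
  have -> : h + e + (h - e) = h + h by ring.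
  have -> : sin (h + e) + sin (h - e) = 2 * sin h * cos e by rewrite sinD sinB; ring.
  rewrite sinD; field; apply/andP; split; rewrite gt_eqF //; lra.
have ce1 : cos e <= 1 by apply: cos_le1.
split => //.
- rewrite /x cosB cosD sinD; field => //.
- rewrite /x sinB sinD sinD; field => //.
  by rewrite hx subr_ge0 ler_pdivrMr // mul1r.
rewrite hx lerD2l lerN2 ler_pdivlMr //.
rewrite -[X in _ <= X]mulr1; apply: ler_wpM2l => //.
Qed.


End P3.


Section P4.
Variable R : realType.

Definition i1 : 'I_2 := Ordinal (isT : (1 < 2)%N).

Lemma dot2 (u v : 'cV[R]_2) : dotv u v = u ord0 ord0 * v ord0 ord0 + u i1 ord0 * v i1 ord0.
Proof. by rewrite /dotv big_ord_recl big_ord1 (_ : lift ord0 ord0 = i1) //; apply: val_inj. Qed.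

Lemma enorm2 (u : 'cV[R]_2) : enorm u = Num.sqrt (u ord0 ord0 ^+ 2 + u i1 ord0 ^+ 2).
Proof. by rewrite /enorm big_ord_recl big_ord1 (_ : lift ord0 ord0 = i1) //; apply: val_inj. Qed.

Variable K : nat.
Hypothesis hK : (3 < K)%N.

Lemma hK0 : 0 < K%:R :> R. Proof. by rewrite ltr0n; exact: (leq_ltn_trans (leq0n 3) hK). Qed.

Lemma cos_le_step (y : R) : (pi *+ 2) / K%:R <= y -> y <= pi *+ 2 - (pi *+ 2) / K%:R ->
  cos y <= cos ((pi *+ 2) / K%:R).
Proof.
move=> h1 h2.
have pi0 := @pi_gt0 R.
have hK' := hK0.
have hKpi : (pi *+ 2) / K%:R <= pi :> R.
  rewrite ler_pdivrMr // mulr2n.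
  have : 4%:R <= K%:R :> R by rewrite ler_nat.
  move=> h4; nra.
have hp : 0 <= (pi *+ 2) / K%:R :> R by apply: divr_ge0; [rewrite mulr2n; lra| lra].
case: (lerP y pi) => hy.
  by apply: ler_cos.
have -> : cos y = cos (pi *+ 2 - y) by rewrite cosB cos2pi sin2pi mul1r mul0r addr0.
apply: ler_cos => //; rewrite mulr2n in h2 *; lra.
Qed.

Lemma polygon_exists : exists W : 'M[R]_(2, K),
  OB W /\ forall k, 1 - cos ((pi *+ 2) / K%:R) <= dist_rest W k.
Proof.
have hK1 : (1 < K)%N by apply: ltn_trans hK.
pose th (j : 'I_K) : R := (pi *+ 2) * j%:R / K%:R.
pose W : 'M[R]_(2, K) := \matrix_(i, j) (if (i : nat) == 0%N then cos (th j) else sin (th j)).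
have hw : OB W.
  by move=> k; rewrite enorm2 !mxE /= cos2Dsin2 sqrtr1.
exists W; split; first exact: hw.
move=> k; apply: (dist_lower hK1 hw).
move=> j hjk; rewrite dot2 !mxE /= -cosB.
have hm : forall m : nat, (0 < m)%N -> (m < K)%N ->
    cos ((pi *+ 2) * m%:R / K%:R) <= cos ((pi *+ 2) / K%:R) :> R.
  move=> m hm1 hm2.
  have pi0 := @pi_gt0 R.
  have hK' := @hK0.
  have h2pi : 0 < pi *+ 2 :> R by rewrite mulr2n; lra.
  apply: cos_le_step.
    rewrite -[X in X <= _]mulr1 -!mulrA ler_pM2l // mulrC ler_pdivlMr //.
    by rewrite mul1r mulVf ?gt_eqF // ler1n.
  have hK1' : K%:R - 1 = K.-1%:R :> R.
    have hKp : K = K.-1.+1 by rewrite prednK // (ltn_trans _ hK).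
    by rewrite [in LHS]hKp -natr1 addrK.
  have -> : pi *+ 2 - pi *+ 2 / K%:R = (pi *+ 2) * (K%:R - 1) / K%:R :> R.
    by field; rewrite gt_eqF.
  rewrite -!mulrA ler_pM2l // ler_pM2r ?invr_gt0 // hK1' ler_nat.
  by rewrite -ltnS prednK // (ltn_trans _ hK).
have hK' := @hK0.
case: (ltngtP j k) => h.
- have -> : th k - th j = (pi *+ 2) * (k - j)%N%:R / K%:R.
    by rewrite /th (natrB _ (ltnW h)) mulrBr mulrBl.
  apply: hm; first by rewrite subn_gt0.
  by apply: leq_ltn_trans (leq_subr _ _) _.
- have -> : th k - th j = - ((pi *+ 2) * (j - k)%N%:R / K%:R).
    by rewrite /th (natrB _ (ltnW h)) mulrBr mulrBl opprB.
  rewrite cosN; apply: hm; first by rewrite subn_gt0.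
  by apply: leq_ltn_trans (leq_subr _ _) _.
- by case/eqP: hjk; apply: val_inj.
Qed.
End P4.


Section P5.
Variable R : realType.

Lemma angle_of (x y : R) : x ^+ 2 + y ^+ 2 = 1 ->
  exists t : R, [/\ 0 <= t, t < pi *+ 2, cos t = x & sin t = y].
Proof.
move=> h.
have pi0 := @pi_gt0 R.
have hx : -1 <= x <= 1 by apply/andP; split; nra.
have hsa : sin (acos x) = `|y|.
  by rewrite sin_acos // (_ : 1 - x ^+ 2 = y ^+ 2) ?sqrtr_sqr //; lra.
have a0 := acos_ge0 hx.
have api := acos_lepi hx.
case: (lerP 0 y) => hy.
  exists (acos x); split => //; first by rewrite mulr2n; lra.
    by rewrite acosK // in_itv.
  by rewrite hsa ger0_norm.
exists (pi *+ 2 - acos x); split.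
- rewrite mulr2n; lra.
- have : 0 < acos x.
    apply: acos_gt0; case/andP: hx => -> _ /=.
    have : y ^+ 2 > 0 by rewrite exprn_even_gt0 //= lt_eqF.
    nra.
  lra.
- by rewrite cosB cos2pi sin2pi mul1r mul0r addr0 acosK // in_itv.
- by rewrite sinB cos2pi sin2pi mul1r mul0r sub0r hsa ltr0_norm ?opprK.
Qed.

Lemma sort_ord (K : nat) (th : 'I_K -> R) : injective th ->
  exists sg : 'I_K -> 'I_K,
    (forall i j : 'I_K, (i < j)%N -> th (sg i) < th (sg j)) /\
    (forall k, exists i, sg i = k).
Proof.
move=> thi.
set s := sort (fun i j => th i <= th j) (enum 'I_K).
have hsz : size s = K by rewrite size_sort size_enum_ord.
have hperm : perm_eq s (enum 'I_K) by rewrite perm_sort.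
have huniq : uniq s by rewrite (perm_uniq hperm) enum_uniq.
have hsorted : sorted (fun i j => th i <= th j) s.
  by apply: sort_sorted => i j; apply: le_total.
exists (fun i => nth i s i); split.
  move=> i j hij.
  have hle : th (nth i s i) <= th (nth i s j).
    have htr : transitive (fun i j : 'I_K => th i <= th j) by move=> a b c; apply: le_trans.
    have hrf : reflexive (fun i j : 'I_K => th i <= th j) by move=> a.
    apply: (sorted_leq_nth htr hrf i hsorted); rewrite ?inE ?hsz //.
    exact: ltnW.
  have -> : nth j s j = nth i s j by apply: set_nth_default; rewrite hsz.
  rewrite lt_neqAle hle andbT; apply/negP => /eqP /thi /eqP.
  rewrite nth_uniq ?hsz // => /eqP hij'.
  by rewrite hij' ltnn in hij.
move=> k.
have hk : k \in s by rewrite (perm_mem hperm) mem_enum.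
have hi : (index k s < K)%N by move: (hk); rewrite -index_mem hsz.
exists (Ordinal hi) => /=.
by rewrite nth_index.
Qed.
End P5.


Section P6a.
Variable R : realType.
Variables (d K : nat).
Hypothesis hK1 : (1 < K)%N.

Lemma witness (W : 'M[R]_(d, K)) k p q l : p != k -> q != k -> 0 <= l <= 1 ->
  dist_rest W k <= enorm (wcol W k - (l *: wcol W p + (1 - l) *: wcol W q)).
Proof.
move=> hp hq /andP [l0 l1].
pose lam i := (if i == p then l else 0) + (if i == q then 1 - l else 0).
have -> : l *: wcol W p + (1 - l) *: wcol W q = \sum_(j < K) lam j *: wcol W j.
  rewrite /lam; under eq_bigr do rewrite scalerDl.
  rewrite big_split /=.
  congr (_ + _).
    by rewrite (bigD1 p) //= eqxx big1 ?addr0 // => j /negbTE ->; rewrite scale0r.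
  by rewrite (bigD1 q) //= eqxx big1 ?addr0 // => j /negbTE ->; rewrite scale0r.
apply: dist_le.
- by move=> j; rewrite /lam; apply: addr_ge0; case: ifP => // _; lra.
- rewrite /lam big_split /= -!big_mkcond /= !big_pred1_eq; lra.
- by rewrite /lam eq_sym (negbTE hp) eq_sym (negbTE hq) addr0.
Qed.
End P6a.

Section P6.
Variable R : realType.
Variable K : nat.
Hypothesis hK : (3 < K)%N.

Lemma col2_eq (u v : 'cV[R]_2) : u ord0 ord0 = v ord0 ord0 -> u i1 ord0 = v i1 ord0 -> u = v.
Proof.
move=> h0 h1; apply/matrixP => i j; rewrite (ord1 j).
case: i => [[|[|//]]] hi.
  by rewrite (_ : Ordinal hi = ord0) //; apply: val_inj.
by rewrite (_ : Ordinal hi = i1) //; apply: val_inj.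
Qed.

Lemma enorm_cs (r t : R) : 0 <= r -> enorm (\col_(i < 2) (if (i : nat) == 0%N then r * cos t else r * sin t)) = r.
Proof.
move=> hr; rewrite enorm2 !mxE /= !exprMn -mulrDr cos2Dsin2 mulr1 sqrtr_sqr ger0_norm //.
Qed.

Lemma enorm0 (n : nat) : enorm (0 : 'cV[R]_n) = 0.
Proof. by rewrite /enorm big1 ?sqrtr0 // => i _; rewrite mxE expr0n. Qed.

Lemma polygon_upper (W : 'M[R]_(2, K)) : OB W ->
  (forall k, 1 - cos (pi *+ 2 / K%:R) <= dist_rest W k) ->
  forall k, dist_rest W k <= 1 - cos (pi *+ 2 / K%:R).
Proof.
move=> hOB hc.
have hK1 : (1 < K)%N by apply: ltn_trans hK.
have hK0 : (0 < K)%N by apply: ltn_trans hK1.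
have pi0 := @pi_gt0 R.
set tau : R := pi *+ 2.
have tauE : tau = pi + pi by rewrite /tau mulr2n.
have hKR : 0 < K%:R :> R by rewrite ltr0n.
have hK4 : 4%:R <= K%:R :> R by rewrite ler_nat.
have hKpi : tau / K%:R <= pi / 2.
  rewrite ler_pdivrMr // tauE; nra.
have htK0 : 0 < tau / K%:R by apply: divr_gt0 => //; lra.
set c := 1 - cos (tau / K%:R).
have c0 : 0 < c.
  rewrite /c subr_gt0 -[X in _ < X]cos0 ltr_cos ?in_itv /=; lra.
have hang : forall k, exists t, [/\ 0 <= t, t < tau, cos t = W ord0 k & sin t = W i1 k].
  move=> k; apply: angle_of.
  by have := dotv_unit (hOB k); rewrite dot2 !mxE -!expr2.
have [th hth] := choice hang.
have thi : injective th.
  move=> j k hjk; case: (eqVneq j k) => // hne; exfalso.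
  have hw : wcol W k = wcol W j.
    apply: col2_eq; rewrite !mxE.
      by case: (hth k) => _ _ <- _; case: (hth j) => _ _ <- _; rewrite hjk.
    by case: (hth k) => _ _ _ <-; case: (hth j) => _ _ _ <-; rewrite hjk.
  have h01 : 0 <= (1 : R) <= 1 by apply/andP; split; lra.
  have := witness W (l := 1) hne hne h01.
  rewrite hw subrr scale0r addr0 scale1r subrr enorm0 => h.
  have := hc k; rewrite -/tau -/c; lra.
have [sg [sgm sgs]] := sort_ord thi.
have sgi : injective sg.
  move=> i j h; case: (ltngtP i j) => hij.
  - by have := sgm _ _ hij; rewrite h ltxx.
  - by have := sgm _ _ hij; rewrite h ltxx.
  - exact: val_inj.
pose om (m : nat) : 'I_K := Ordinal (ltn_pmod m hK0).
pose idx m := sg (om m).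
pose T (m : nat) : R := th (idx m) + tau *+ (m %/ K).
have Tc : forall m, W ord0 (idx m) = cos (T m).
  by move=> m; rewrite /T (periodicn (@cosD2pi R)); case: (hth (idx m)).
have Ts : forall m, W i1 (idx m) = sin (T m).
  by move=> m; rewrite /T (periodicn (@sinD2pi R)); case: (hth (idx m)).
have Tinc : forall m, T m < T m.+1.
  move=> m; rewrite /T /idx (divnS m hK0).
  case: (boolP (K %| m.+1)%N) => hdv.
    rewrite add1n mulrS.
    case: (hth (sg (om m))) => _ h1 _ _; case: (hth (sg (om m.+1))) => h2 _ _ _.
    lra.
  rewrite add0n ltrD2r; apply: sgm => /=.
  by rewrite modnS (negbTE hdv).
have TK : forall m, T (m + K)%N = T m + tau.
  move=> m; rewrite /T /idx.
  have -> : om (m + K)%N = om m by apply: val_inj => /=; rewrite modnDr.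
  rewrite divnDr ?dvdnn // divnn hK0 addn1 mulrS; ring.
have Tsum : forall b n, \sum_(i < n) (T (b + i)%N.+1 - T (b + i)%N) = T (b + n)%N - T b.
  move=> b; elim => [|n IH]; first by rewrite big_ord0 addn0 subrr.
  by rewrite big_ord_recr /= IH addnS; ring.
have hcons : forall m, idx m != idx m.+1.
  move=> m; apply/negP => /eqP /sgi /(congr1 val) /= hm.
  have : (m + 0 == m + 1 %[mod K])%N by rewrite addn0 addn1 hm.
  by rewrite eqn_modDl mod0n modn_small.
have hKp : K.-1.+1 = K by rewrite prednK.
have hcur : forall i : 'I_K, idx (K.-1 + i)%N.+1 = sg i.
  move=> i; rewrite /idx; congr sg; apply: val_inj => /=.
  by rewrite -addSn hKp modnDl modn_small.
pose s (i : 'I_K) := T (K.-1 + i)%N.+2 - T (K.-1 + i)%N.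
have hsumS : \sum_(i < K) s i = tau + tau.
  rewrite /s (eq_bigr (fun i : 'I_K => (T (K.-1 + i)%N.+1 - T (K.-1 + i)%N) +
                (T (K + i)%N.+1 - T (K + i)%N))); last first.
    by move=> i _; rewrite -addSn hKp; ring.
  rewrite big_split /= !Tsum !TK; ring.
have hbound : forall i, s i <= pi -> dist_rest W (sg i) <= 1 - cos (s i / 2).
  move=> i hs; rewrite -hcur.
  set b := (K.-1 + i)%N.
  set t := T b.+1.
  set a := t - T b.
  set e := T b.+2 - t.
  have ha : 0 < a by rewrite /a subr_gt0; apply: Tinc.
  have he : 0 < e by rewrite /e subr_gt0; apply: Tinc.
  have hsae : s i = a + e by rewrite /s /a /e -/b; ring.
  rewrite hsae in hs *.
  have [hpos hx hy hr1 hr2] := chord_bound t ha he hs.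
  have sa : 0 < sin a by apply: sin_gt0_pi; lra.
  have se : 0 < sin e by apply: sin_gt0_pi; lra.
  set l := sin e / (sin a + sin e).
  have hl : 0 <= l <= 1.
    apply/andP; split; first by apply: divr_ge0; lra.
    by rewrite ler_pdivrMr // mul1r; lra.
  have hl1 : 1 - l = sin a / (sin a + sin e) by rewrite /l; field; rewrite gt_eqF.
  have hp : idx b != idx b.+1 := hcons b.
  have hq : idx b.+2 != idx b.+1 by rewrite eq_sym; apply: hcons.
  have := witness W hp hq hl.
  set x := sin (a + e) / (sin a + sin e).
  have -> : wcol W (idx b.+1) - (l *: wcol W (idx b) + (1 - l) *: wcol W (idx b.+2)) =
      \col_(i < 2) (if (i : nat) == 0%N then (1 - x) * cos t else (1 - x) * sin t).
    have tb : T b = t - a by rewrite /a; ring.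
    have tb2 : T b.+2 = t + e by rewrite /e; ring.
    apply: col2_eq; rewrite !mxE /= ?Tc ?Ts -/t tb tb2 hl1.
      by rewrite -hx.
    by rewrite -hy.
  rewrite enorm_cs // => h; exact: le_trans h hr2.
have hs0 : forall i, 0 < s i.
  move=> i; rewrite /s; have := Tinc (K.-1 + i)%N; have := Tinc (K.-1 + i)%N.+1; lra.
have hsge : forall i, (tau / K%:R) *+ 2 <= s i.
  move=> i; rewrite mulr2n; case: (lerP (s i) pi) => hsi; last by lra.
  have h1 := le_trans (hc (sg i)) (hbound i hsi).
  rewrite -/tau in h1.
  have h2 : cos (s i / 2) <= cos (tau / K%:R) by lra.
  have h3 := hs0 i.
  case: (lerP (tau / K%:R) (s i / 2)) => h4; first lra.
  have : cos (tau / K%:R) < cos (s i / 2).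
    rewrite ltr_cos ?in_itv /=; try (apply/andP; split); lra.
  lra.
have hseq : forall i, s i = (tau / K%:R) *+ 2.
  have hs00 : \sum_(i < K) (s i - (tau / K%:R) *+ 2) = 0.
    rewrite sumrB hsumS sumr_const card_ord -mulr_natr -mulr_natr.
    by field; rewrite gt_eqF.
  move=> i; apply/eqP; rewrite -subr_eq0; apply/eqP.
  by apply: (psumr_eq0P _ hs00) => // j _; rewrite subr_ge0.
move=> k; have [i <-] := sgs k.
have hsi : s i <= pi by rewrite hseq mulr2n; lra.
have := hbound i hsi; rewrite hseq.
have e2 : forall y : R, y *+ 2 / 2 = y by move=> y; rewrite mulr2n; field.
by rewrite e2.
Qed.

End P6.


Theorem mainTheorem7 (R : realType) (d K : nat)
  (hK : (2 <= K)%N) (hd : (1 <= d)%N) (hdK : (d == 2)%N || (K <= d.+1)%N)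
  (W : 'M[R]_(d, K)) (hW : softmax_code W) :
  forall k : 'I_K, ~ rattler W k.
Proof.
have hK1 : (1 < K)%N by [].
case/orP: hdK => [/eqP hd2 | hKd].
  subst d; case: (leqP K 3) => hK3.
    exact: (reduction hK1 hW (simplex_exists R hK1 hK3) (simplex_upper hK1)).
  exact: (reduction hK1 hW (polygon_exists R hK3) (polygon_upper hK3)).
exact: (reduction hK1 hW (simplex_exists R hK1 hKd) (simplex_upper hK1)).
Qed.
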